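(* Let $\mathbb{K}$ be a field with $\mathbb{Q}\subseteq\mathbb{K}\subseteq\mathbb{C}$, and let $m,n$ be positive integers with $1\le m<n$. Suppose the complex numbers $x_1,\dots,x_n$ and $y_1,\dots,y_m$ satisfy $$f_j(x_1,\dots,x_n,y_1,\dots,y_m)=0\qquad(j=1,\dots,m)$$ for some polynomials $f_j(X_1,\dots,X_n,Y_1,\dots,Y_m)\in\mathbb{K}[X_1,\dots,X_n,Y_1,\dots,Y_m]$. If $x_1,\dots,x_n$ are algebraically independent over $\mathbb{K}$ and $$\det\Big(\frac{\partial f_j}{\partial X_i}(x_1,\dots,x_n,y_1,\dots,y_m)\Big)_{1\le i,j\le m}\neq0,$$ then $y_1,\dots,y_m$ are algebraically independent over the field $\mathbb{K}(x_{m+1},\dots,x_n)$.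
   Context: The determinant is of the $m\times m$ matrix with rows indexed by $j$ and columns indexed by $i$, both ranging over $1,\dots,m$ (only the partial derivatives with respect to $X_1,\dots,X_m$ are used). *)

(* Defs.v *)
From HB Require Import structures.
From mathcomp Require Import all_boot all_order all_algebra.
From mathcomp Require Import Rstruct.
From mathcomp Require Import complex.
From mathcomp Require Import mpoly.
Set Implicit Arguments. Unset Strict Implicit. Unset Printing Implicit Defensive.
Import Order.TTheory GRing.Theory Num.Theory.
Local Open Scope ring_scope.

Notation C := (complex Rdefinitions.R).

(* L (a subset of C) is a subfield of C: contains 1, closed under
   subtraction and division (x / 0 = 0 in MathComp, as in divring_closed). *)
Definition is_subfield (L : C -> Prop) : Prop :=
  [/\ L 1,
      forall a b, L a -> L b -> L (a - b) &
      forall a b, L a -> L b -> L (a / b)].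

Definition gen_field (K S : C -> Prop) : C -> Prop :=
  fun z => forall L : C -> Prop, is_subfield L ->
     (forall a, K a -> L a) -> (forall a, S a -> L a) -> L z.

Definition coeffs_in (L : C -> Prop) (k : nat) (p : {mpoly C[k]}) : Prop :=
  forall mono, mono \in msupp p -> L p@_mono.

Definition alg_indep_over (L : C -> Prop) (k : nat) (z : 'I_k -> C) : Prop :=
  forall p : {mpoly C[k]}, coeffs_in L p -> p.@[z] = 0 -> p = 0.

(* The point (x_1..x_n, y_1..y_m) of C^(n+m); variable X_i is index i-1,
   variable Y_j is index n + j - 1. *)
Definition join_pt (n m : nat) (x : 'I_n -> C) (y : 'I_m -> C) : 'I_(n + m) -> C :=
  fun k => match split k with inl i => x i | inr j => y j end.

(* Main.v *)
Require Import Defs.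
From HB Require Import structures.
From mathcomp Require Import all_boot all_order all_algebra.
From mathcomp Require Import Rstruct complex mpoly.
From Stdlib Require Import Classical ClassicalEpsilon.
From mathcomp Require Import ring zify.
Set Implicit Arguments. Unset Strict Implicit. Unset Printing Implicit Defensive.
Import Order.TTheory GRing.Theory Num.Theory.
Local Open Scope ring_scope.

Section KClosure.
Variable K : C -> Prop.
Hypothesis HK : is_subfield K.

Lemma K1 : K 1. Proof. by case: HK. Qed.
Lemma KB a b : K a -> K b -> K (a - b). Proof. by case: HK => _ H _; apply: H. Qed.
Lemma Kdiv a b : K a -> K b -> K (a / b). Proof. by case: HK => _ _ H; apply: H. Qed.
Lemma K0 : K 0. Proof. by rewrite -(subrr 1); apply: KB; apply: K1. Qed.
Lemma KN a : K a -> K (- a). Proof. by move=> Ha; rewrite -sub0r; apply: KB => //; apply: K0. Qed.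
Lemma KD a b : K a -> K b -> K (a + b).
Proof. by move=> Ha Hb; rewrite -[b]opprK; apply: KB => //; apply: KN. Qed.
Lemma KV a : K a -> K (a^-1).
Proof. by move=> Ha; rewrite -div1r; apply: Kdiv => //; apply: K1. Qed.
Lemma KM a b : K a -> K b -> K (a * b).
Proof. by move=> Ha Hb; rewrite -[b]invrK; apply: Kdiv => //; apply: KV. Qed.
Lemma Knat k : K k%:R.
Proof. elim: k => [|k IH]; first exact: K0. by rewrite mulrS; apply: KD => //; apply: K1. Qed.
Lemma KMn a k : K a -> K (a *+ k).
Proof. by move=> Ha; rewrite -mulr_natr; apply: KM => //; apply: Knat. Qed.
Lemma Kb (b : bool) : K b%:R.
Proof. exact: Knat. Qed.
Lemma Ksum (I : Type) (r : seq I) (P : pred I) (F : I -> C) :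
  (forall i, P i -> K (F i)) -> K (\sum_(i <- r | P i) F i).
Proof. by move=> H; apply: (big_ind K) => //; [exact: K0 | exact: KD]. Qed.

Definition Kp {N} (p : {mpoly C[N]}) := forall mono, K p@_mono.
Section KpN.
Variable N : nat.
Implicit Types p q : {mpoly C[N]}.

Lemma Kp0 : Kp (0 : {mpoly C[N]}). Proof. by move=> mono; rewrite mcoeff0; apply: K0. Qed.
Lemma KpC c : K c -> Kp (c%:MP : {mpoly C[N]}).
Proof. by move=> Hc mono; rewrite mcoeffC; apply: KM => //; apply: Kb. Qed.
Lemma Kp1 : Kp (1 : {mpoly C[N]}). Proof. by apply: KpC; apply: K1. Qed.
Lemma KpX (mono : 'X_{1..N}) : Kp ('X_[mono] : {mpoly C[N]}). Proof. by move=> m'; rewrite mcoeffX; apply: Kb. Qed.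
Lemma KpD p q : Kp p -> Kp q -> Kp (p + q).
Proof. by move=> Hp Hq mono; rewrite mcoeffD; apply: KD. Qed.
Lemma KpN p : Kp p -> Kp (- p).
Proof. by move=> Hp mono; rewrite mcoeffN; apply: KN. Qed.
Lemma KpB p q : Kp p -> Kp q -> Kp (p - q).
Proof. by move=> Hp Hq; apply: KpD => //; apply: KpN. Qed.
Lemma KpM p q : Kp p -> Kp q -> Kp (p * q).
Proof. by move=> Hp Hq mono; rewrite mcoeffM; apply: Ksum => i _; apply: KM. Qed.
Lemma KpZ c p : K c -> Kp p -> Kp (c *: p).
Proof. by move=> Hc Hp mono; rewrite mcoeffZ; apply: KM. Qed.
Lemma Kpsum (I : Type) (r : seq I) (P : pred I) (F : I -> {mpoly C[N]}) :
  (forall i, P i -> Kp (F i)) -> Kp (\sum_(i <- r | P i) F i).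
Proof. by move=> H; apply: (big_ind Kp) => //; [exact: Kp0 | exact: KpD]. Qed.
Lemma Kpprod (I : Type) (r : seq I) (P : pred I) (F : I -> {mpoly C[N]}) :
  (forall i, P i -> Kp (F i)) -> Kp (\prod_(i <- r | P i) F i).
Proof. by move=> H; apply: (big_ind Kp) => //; [exact: Kp1 | exact: KpM]. Qed.
Lemma KpXn p k : Kp p -> Kp (p ^+ k).
Proof. move=> Hp; elim: k => [|k IH]; first exact: Kp1. by rewrite exprS; apply: KpM. Qed.
Lemma Kpderiv p j : Kp p -> Kp (p^`M(j)).
Proof. by move=> Hp mono; rewrite mcoeff_mderiv; apply: KMn. Qed.
End KpN.
Lemma Kp_mmap N M (h : 'I_N -> {mpoly C[M]}) (p : {mpoly C[N]}) :
  Kp p -> (forall j, Kp (h j)) -> Kp (mmap (@mpolyC M C) h p).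
Proof.
move=> Hp Hh; rewrite /mmap; apply: Kpsum => mono _.
apply: KpM; first exact: KpC.
by rewrite /mmap1; apply: Kpprod => i _; apply: KpXn.
Qed.
End KClosure.
Section MMapLemmas.
Variables (N : nat) (R S : comRingType).
Implicit Types (p q : {mpoly R[N]}).

Lemma mmap_eq_h (f : R -> S) (h h' : 'I_N -> S) p :
  (forall mono, p@_mono != 0 -> forall j, mono j != 0%N -> h j = h' j) ->
  mmap f h p = mmap f h' p.
Proof.
move=> H; rewrite /mmap; apply: eq_big_seq => mono; rewrite mcoeff_msupp => Hm.
congr (_ * _); rewrite /mmap1; apply: eq_bigr => i _.
by case: (eqVneq (mono i) 0%N) => [->|Hi]; rewrite ?expr0 // (H _ Hm i Hi).
Qed.

Lemma mmap_eq_f (f f' : R -> S) (h : 'I_N -> S) p :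
  f =1 f' -> mmap f h p = mmap f' h p.
Proof. by move=> H; rewrite /mmap; apply: eq_bigr => mono _; rewrite H. Qed.

Lemma rmorph_mmap (T : comRingType) (phi : {rmorphism S -> T}) (f : R -> S) (h : 'I_N -> S) p :
  phi (mmap f h p) = mmap (phi \o f) (phi \o h) p.
Proof.
rewrite /mmap rmorph_sum; apply: eq_bigr => mono _.
rewrite rmorphM /mmap1 rmorph_prod; congr (_ * _); apply: eq_bigr => i _.
by rewrite rmorphXn.
Qed.
End MMapLemmas.

Lemma mmap_id (N : nat) (R : comRingType) (p : {mpoly R[N]}) :
  mmap (@mpolyC N R) (fun j => 'X_j) p = p.
Proof.
rewrite -[RHS](comp_mpoly_id p) /comp_mpoly; apply: mmap_eq_h => mono _ j _.
by rewrite tnth_mktuple.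
Qed.

Lemma meval_mmap (N : nat) (R : comRingType) (v : 'I_N -> R) (p : {mpoly R[N]}) :
  p.@[v] = mmap idfun v p.
Proof. by []. Qed.
Definition vars_in {N} (S : 'I_N -> Prop) (p : {mpoly C[N]}) :=
  forall mono, p@_mono != 0 -> forall j, mono j != 0%N -> S j.

Section VarsIn.
Variables (N : nat) (S : 'I_N -> Prop).
Implicit Types p q : {mpoly C[N]}.

Lemma vi_weak (S' : 'I_N -> Prop) p : (forall j, S j -> S' j) -> vars_in S p -> vars_in S' p.
Proof. by move=> H Hp mono Hm j Hj; apply/H/(Hp mono Hm j Hj). Qed.
Lemma vi0 : vars_in S 0. Proof. by move=> mono; rewrite mcoeff0 eqxx. Qed.
Lemma viC c : vars_in S c%:MP.
Proof.
move=> mono; rewrite mcoeffC; case: (eqVneq mono 0%MM) => [->|]; last by rewrite mulr0 eqxx.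
by move=> _ j; rewrite mnm0E eqxx.
Qed.
Lemma vi1 : vars_in S 1. Proof. exact: viC. Qed.
Lemma viX j : S j -> vars_in S 'X_j.
Proof.
move=> Hj mono; rewrite mcoeffX; case: (eqVneq U_(j)%MM mono) => [<-|]; last by rewrite eqxx.
by move=> _ j'; rewrite mnm1E; case: (eqVneq j j') => [<-|].
Qed.
Lemma viD p q : vars_in S p -> vars_in S q -> vars_in S (p + q).
Proof.
move=> Hp Hq mono; rewrite mcoeffD => H.
case: (eqVneq p@_mono 0) => [Hp0|Hp0]; last exact: Hp.
by apply: Hq; move: H; rewrite Hp0 add0r.
Qed.
Lemma viN p : vars_in S p -> vars_in S (- p).
Proof. by move=> Hp mono; rewrite mcoeffN oppr_eq0; apply: Hp. Qed.
Lemma viB p q : vars_in S p -> vars_in S q -> vars_in S (p - q).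
Proof. by move=> Hp Hq; apply: viD => //; apply: viN. Qed.
Lemma viZ c p : vars_in S p -> vars_in S (c *: p).
Proof.
move=> Hp mono; rewrite mcoeffZ => H; apply: Hp.
by apply: contraNneq H => ->; rewrite mulr0.
Qed.
Lemma viM p q : vars_in S p -> vars_in S q -> vars_in S (p * q).
Proof.
move=> Hp Hq mono H j Hj.
have: mono \in msupp (p * q) by rewrite mcoeff_msupp.
move/msuppM_le/allpairsP => [[m1 m2] /= [H1 H2 Em]]; rewrite {}Em in H Hj *.
move: Hj; rewrite mnmDE; case: (eqVneq (m1 j) 0%N) => [->|H1j] /=.
  by apply: Hq; rewrite -mcoeff_msupp.
by move=> _; apply: (Hp m1) => //; rewrite -mcoeff_msupp.
Qed.
Lemma visum (I : Type) (r : seq I) (P : pred I) (F : I -> {mpoly C[N]}) :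
  (forall i, P i -> vars_in S (F i)) -> vars_in S (\sum_(i <- r | P i) F i).
Proof. by move=> H; apply: (big_ind (vars_in S)) => //; [exact: vi0 | exact: viD]. Qed.
Lemma viprod (I : Type) (r : seq I) (P : pred I) (F : I -> {mpoly C[N]}) :
  (forall i, P i -> vars_in S (F i)) -> vars_in S (\prod_(i <- r | P i) F i).
Proof. by move=> H; apply: (big_ind (vars_in S)) => //; [exact: vi1 | exact: viM]. Qed.
Lemma viXn p k : vars_in S p -> vars_in S (p ^+ k).
Proof. move=> Hp; elim: k => [|k IH]; first exact: vi1. by rewrite exprS; apply: viM. Qed.
Lemma vimono (mono : 'X_{1..N}) : (forall j, mono j != 0%N -> S j) -> vars_in S 'X_[mono].
Proof.
move=> H m'; rewrite mcoeffX; case: (eqVneq mono m') => [<-|]; last by rewrite eqxx.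
by move=> _; apply: H.
Qed.
Lemma videriv p i : vars_in S p -> vars_in S (p^`M(i)).
Proof.
move=> Hp mono; rewrite mcoeff_mderiv => H j Hj.
apply: (Hp (mono + U_(i))%MM).
  by apply: contraNneq H => ->; rewrite mul0rn.
by rewrite mnmDE; move: Hj; case: (mono j).
Qed.
Lemma mderiv_novar p i : vars_in S p -> ~ S i -> p^`M(i) = 0.
Proof.
move=> Hp Hi; apply/mpolyP => mono; rewrite mcoeff_mderiv mcoeff0.
case: (eqVneq p@_(mono + U_(i))%MM 0) => [->|H]; first by rewrite mul0rn.
by exfalso; apply: Hi; apply: (Hp _ H); rewrite mnmDE mnm1E eqxx addn1.
Qed.
End VarsIn.

Section Dd.
Variables (N : nat) (z : 'I_N -> C).
Implicit Types (p q : {mpoly C[N]}) (d : 'I_N -> C).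

Definition Dd d p := \sum_(l < N) d l * (p^`M(l)).@[z].

Lemma DdD d p q : Dd d (p + q) = Dd d p + Dd d q.
Proof. by rewrite /Dd -big_split; apply: eq_bigr => l _; rewrite mderivD mevalD mulrDr. Qed.
Lemma DdN d p : Dd d (- p) = - Dd d p.
Proof. by rewrite /Dd -sumrN; apply: eq_bigr => l _; rewrite mderivN mevalN mulrN. Qed.
Lemma DdB d p q : Dd d (p - q) = Dd d p - Dd d q.
Proof. by rewrite DdD DdN. Qed.
Lemma DdM d p q : Dd d (p * q) = Dd d p * q.@[z] + p.@[z] * Dd d q.
Proof.
rewrite /Dd mulr_suml mulr_sumr -big_split; apply: eq_bigr => l _.
by rewrite mderivM mevalD !mevalM mulrDr; congr (_ + _); ring.
Qed.
Lemma DdC d c : Dd d c%:MP = 0.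
Proof. by rewrite /Dd big1 // => l _; rewrite mderivC meval0 mulr0. Qed.
Lemma Ddsum d (I : Type) (r : seq I) (P : pred I) (F : I -> {mpoly C[N]}) :
  Dd d (\sum_(i <- r | P i) F i) = \sum_(i <- r | P i) Dd d (F i).
Proof.
apply: (big_morph (Dd d)); first exact: DdD.
by rewrite -(mpolyC0) DdC.
Qed.
Lemma Dd_eqd (S : 'I_N -> Prop) d d' p :
  (forall l, S l -> d l = d' l) -> vars_in S p -> Dd d p = Dd d' p.
Proof.
move=> H Hp; rewrite /Dd; apply: eq_bigr => l _.
case: (classic (S l)) => Hl; first by rewrite H.
by rewrite (mderiv_novar Hp Hl) meval0 !mulr0.
Qed.
Definition upd d (j0 : 'I_N) (v : C) := fun l => if l == j0 then v else d l.
Lemma Dd_upd d j0 v p :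
  Dd (upd d j0 v) p = Dd d p + (v - d j0) * (p^`M(j0)).@[z].
Proof.
rewrite /Dd (bigD1 j0) //= [in RHS](bigD1 j0) //= /upd eqxx.
rewrite [in LHS](eq_bigr (fun l => d l * (p^`M(l)).@[z])); last first.
  by move=> l /negbTE ->.
ring.
Qed.
End Dd.

Section GMap.
Variables (N : nat) (z : 'I_N -> C) (j0 : 'I_N).
Implicit Types (p q : {mpoly C[N]}).

Definition hG (l : 'I_N) : {poly C} := if l == j0 then 'X else (z l)%:P.
Definition G p : {poly C} := mmap (@polyC C) hG p.

Lemma GM p q : G (p * q) = G p * G q.
Proof. by rewrite /G rmorphM. Qed.
Lemma GD p q : G (p + q) = G p + G q.
Proof. by rewrite /G rmorphD. Qed.
Lemma GB p q : G (p - q) = G p - G q.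
Proof. by rewrite /G rmorphB. Qed.
Lemma GXn k : G ('X_j0 ^+ k) = 'X^k.
Proof. by rewrite /G rmorphXn /= mmapX mmap1U /hG eqxx. Qed.
Lemma GC c : G c%:MP = c%:P.
Proof. by rewrite /G mmapC. Qed.

Lemma Ghorner p : (G p).[z j0] = p.@[z].
Proof.
rewrite /G -horner_evalE rmorph_mmap meval_mmap.
rewrite (@mmap_eq_f _ _ _ _ idfun); last by move=> c /=; rewrite horner_evalE hornerC.
apply: mmap_eq_h => mono _ l _ /=; rewrite horner_evalE /hG.
by case: (eqVneq l j0) => [->|_]; rewrite ?hornerX ?hornerC.
Qed.

Lemma Gconst p : vars_in (fun l => l != j0) p -> G p = (p.@[z])%:P.
Proof.
move=> Hp; rewrite /G (@mmap_eq_h _ _ _ _ hG (fun l => (z l)%:P)); last first.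
  by move=> mono Hm l Hl; rewrite /hG (negbTE (Hp mono Hm l Hl)).
by rewrite meval_mmap rmorph_mmap.
Qed.

Definition mz (mono : 'X_{1..N}) : 'X_{1..N} :=
  [multinom (if i == j0 then 0%N else mono i) | i < N].

Definition ce p (e : nat) : {mpoly C[N]} :=
  \sum_(mono <- msupp p | mono j0 == e) p@_mono *: 'X_[mz mono].

Lemma mono_lt_msize p mono : mono \in msupp p -> (mono j0 < msize p)%N.
Proof.
move=> /msize_mdeg_lt; apply: leq_ltn_trans.
by rewrite mdegE (bigD1 j0) //= leq_addr.
Qed.

Lemma decomp p : p = \sum_(e < msize p) ce p e * 'X_j0 ^+ e.
Proof.
rewrite /ce.
rewrite (eq_bigr (fun e : 'I_(msize p) => \sum_(mono <- msupp p)
    (if mono j0 == e then p@_mono *: 'X_[mono] else 0))); last first.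
  move=> e _; rewrite big_distrl /= big_mkcond /=; apply: eq_bigr => mono _.
  case: (eqVneq (mono j0) e) => [He|]; last by []. idtac.
  rewrite -scalerAl mpolyXn -mpolyXD; congr (_ *: 'X_[_]).
  apply/mnmP => i; rewrite mnmDE mnmE mulmnE mnm1E.
  case: (eqVneq j0 i) => [<-|Hi]. rewrite ?eqxx ?He ?mul1n //.
 by rewrite /= addn0.
rewrite exchange_big /= [LHS]mpolyE; apply: eq_big_seq => mono Hm.
rewrite -big_mkcond /= (big_pred1 (Ordinal (mono_lt_msize Hm))) //.
by move=> e; rewrite /= eq_sym -val_eqE.
Qed.

Lemma ce_K (K : C -> Prop) : is_subfield K -> forall p e, Kp K p -> Kp K (ce p e).
Proof.
move=> HK p e Hp; rewrite /ce; apply: Kpsum => // mono _.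
by apply: KpZ => //; apply: KpX.
Qed.

Lemma ce_vi (S : 'I_N -> Prop) p e :
  vars_in S p -> vars_in (fun l => S l /\ l != j0) (ce p e).
Proof.
move=> Hp; rewrite /ce big_seq_cond; apply: visum => mono /andP [Hm _].
apply: viZ; apply: vimono => j.
rewrite mnmE; case: (eqVneq j j0) => [_|Hj]; first by rewrite eqxx.
move=> Hmj; split => //; apply: (Hp mono) => //.
by rewrite -mcoeff_msupp.
Qed.

Lemma ce_big p e : (msize p <= e)%N -> ce p e = 0.
Proof.
move=> He; rewrite /ce big_seq_cond big1 // => mono /andP [Hm /eqP Hme].
by move: (mono_lt_msize Hm); rewrite Hme ltnNge He.
Qed.

Lemma coef_G p e : (G p)`_e = (ce p e).@[z].
Proof.
have Hc : forall e', G (ce p e') = ((ce p e').@[z])%:P.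
  move=> e'; apply: Gconst; apply: (vi_weak (S := fun l => True /\ l != j0)).
    by move=> l [].
  by apply: ce_vi => ? _ ? _.
rewrite {1}[p]decomp /G rmorph_sum /= -/G coef_sum.
rewrite (eq_bigr (fun e' : 'I_(msize p) => (ce p e').@[z] * (e == e')%:R)); last first.
  move=> e' _; rewrite rmorphM /=.
  by change ((G (ce p e') * G ('X_j0 ^+ e'))`_e = (ce p e').@[z] * (e == e')%:R);
    rewrite Hc GXn coefCM coefXn.
case: (ltnP e (msize p)) => He.
  rewrite (bigD1 (Ordinal He)) //= eqxx mulr1 big1 ?addr0 // => e' Hne.
  rewrite (_ : (e == e') = false) ?mulr0 //; apply: contraNF Hne => /eqP He'.
  by apply/eqP/val_inj.
rewrite ce_big // meval0 big1 // => e' _.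
by rewrite (gtn_eqF (leq_trans (ltn_ord e') He)) mulr0.
Qed.

Lemma mderivXn_j0 e : ('X_j0 ^+ e : {mpoly C[N]})^`M(j0) = ('X_j0 ^+ e.-1) *+ e.
Proof.
rewrite !mpolyXn mderivX mulmnE mnm1E eqxx mul1n.
rewrite (_ : (U_(j0) *+ e - U_(j0))%MM = (U_(j0) *+ e.-1)%MM).
  by rewrite scaler_nat.
apply/mnmP => i; rewrite mnmBE !mulmnE mnm1E.
by case: (j0 == i) => /=; rewrite ?mul1n ?subn1 ?mul0n.
Qed.

Lemma G_deriv p : G (p^`M(j0)) = (G p)^`().
Proof.
have Hc : forall e', G (ce p e') = ((ce p e').@[z])%:P.
  move=> e'; apply: Gconst; apply: (vi_weak (S := fun l => True /\ l != j0)).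
    by move=> l [].
  by apply: ce_vi => ? _ ? _.
have Hd : forall e', (ce p e')^`M(j0) = 0.
  move=> e'; apply: (@mderiv_novar _ (fun l => True /\ l != j0)).
    by apply: ce_vi => ? _ ? _.
  by case=> _; rewrite eqxx.
rewrite {1 2}[p]decomp.
rewrite (big_morph (mderiv j0) (mderivD j0) (mderiv0 _ j0)).
rewrite /G !rmorph_sum /= -/G (big_morph _ (@derivD C) (@deriv0 C)).
apply: eq_bigr => e _.
rewrite mderivM Hd mul0r add0r mderivXn_j0.
change (G (ce p e * ('X_j0 ^+ e.-1 *+ e)) = (G (ce p e * 'X_j0 ^+ e))^`()).
rewrite !GM Hc GXn /G rmorphMn /=.
by change (mmap polyC hG ('X_j0 ^+ e.-1)) with (G ('X_j0 ^+ e.-1)); rewrite GXn deriv_mulC derivXn.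
Qed.
End GMap.

Lemma ex_min (T : Type) (Q : T -> Prop) (f : T -> nat) :
  (exists t, Q t) -> exists t, Q t /\ forall u, Q u -> (f t <= f u)%N.
Proof.
move=> [t0 Ht0].
suff H : forall s t, Q t -> (f t <= s)%N -> exists t, Q t /\ forall u, Q u -> (f t <= f u)%N.
  exact: (H _ t0 Ht0 (leqnn _)).
elim=> [|s IH] t Ht Hs.
  by exists t; split => // u _; move: Hs; rewrite leqn0 => /eqP ->.
case: (classic (exists u, Q u /\ (f u < f t)%N)) => [[u [Hu Hlt]]|Hno].
  by apply: (IH u Hu); rewrite -ltnS (leq_trans Hlt Hs).
exists t; split => // u Hu; rewrite leqNgt; apply/negP => Hlt.
by apply: Hno; exists u.
Qed.

Section Step.
Variables (K : C -> Prop) (HK : is_subfield K) (N : nat) (z : 'I_N -> C).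
Variables (S : 'I_N -> Prop) (j0 : 'I_N) (d : 'I_N -> C).
Hypothesis Hj0 : ~ S j0.
Hypothesis IH : forall p, Kp K p -> vars_in S p -> p.@[z] = 0 -> Dd z d p = 0.
Definition Sx (l : 'I_N) := S l \/ l = j0.

Lemma ce_S p e : vars_in Sx p -> vars_in S (ce j0 p e).
Proof.
move=> Hp; apply: (vi_weak (S := fun l => Sx l /\ l != j0)); last exact: ce_vi.
by move=> l [[//|->]]; rewrite eqxx.
Qed.

Lemma upd_S v l : S l -> upd d j0 v l = d l.
Proof. by move=> Hl; rewrite /upd; case: eqP => // E; rewrite E in Hl. Qed.

Lemma zero_case v p : Kp K p -> vars_in Sx p -> G z j0 p = 0 ->
  Dd z (upd d j0 v) p = 0.
Proof.
move=> Kpp Vp G0.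
rewrite (decomp j0 p) Ddsum big1 // => e _.
have Hce : (ce j0 p e).@[z] = 0 by rewrite -(coef_G z) G0 coef0.
have E := @Dd_eqd _ z S (upd d j0 v) d (ce j0 p e) (@upd_S v) (ce_S (e:=e) Vp).
rewrite DdM Hce mul0r addr0 E IH ?mul0r //.
  exact: ce_K.
exact: ce_S.
Qed.

Lemma step : exists v, forall p, Kp K p -> vars_in Sx p -> p.@[z] = 0 ->
  Dd z (upd d j0 v) p = 0.
Proof.
case: (classic (exists p, [/\ Kp K p, vars_in Sx p, p.@[z] = 0 & G z j0 p != 0]))
  => [Hex|Hnex]; last first.
  exists 0 => p Kpp Vp Zp; apply: zero_case => //.
  by case: (eqVneq (G z j0 p) 0) => // H; exfalso; apply: Hnex; exists p.
have [mu [[Kmu Vmu Zmu Gmu] Hmin]] := ex_min (fun p => size (G z j0 p)) Hex.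
set mu' := mu^`M(j0).
have Gmu' : G z j0 mu' = (G z j0 mu)^`() by apply: G_deriv.
have sz2 : (1 < size (G z j0 mu))%N.
  rewrite ltnNge; apply/negP => /size1_polyC Hc.
  move: (Ghorner z j0 mu); rewrite Zmu Hc hornerC => Hc0.
  by move: Gmu; rewrite Hc Hc0 eqxx.
have Gmu'0 : G z j0 mu' != 0.
  rewrite Gmu'; apply/eqP => /(congr1 (fun q : {poly C} => q`_(size (G z j0 mu)).-2)).
  rewrite coef_deriv coef0 prednK; last by rewrite -ltnS prednK // ltnW.
  move/eqP; rewrite mulrn_eq0 => /orP [/eqP H|].
    by move: (sz2); rewrite -(prednK (ltnW sz2)) H.
  by rewrite -lead_coefE lead_coef_eq0 (negbTE Gmu).
have szlt : (size (G z j0 mu') < size (G z j0 mu))%N by rewrite Gmu'; apply: lt_size_deriv.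
have Kmu' : Kp K mu' by apply: Kpderiv.
have Vmu' : vars_in Sx mu' by apply: videriv.
have mu'z : mu'.@[z] != 0.
  apply/eqP => H; have := Hmin mu' (And4 Kmu' Vmu' H Gmu'0).
  by rewrite leqNgt szlt.
set v := d j0 - Dd z d mu / mu'.@[z].
exists v.
have Dmu : Dd z (upd d j0 v) mu = 0.
  rewrite Dd_upd /v -/mu'; field; exact: mu'z.
suff H : forall s p, (size (G z j0 p) <= s)%N -> Kp K p -> vars_in Sx p -> p.@[z] = 0 ->
    Dd z (upd d j0 v) p = 0.
  by move=> p; apply: (H _ p (leqnn _)).
elim=> [|s IHs] p Hs Kpp Vp Zp.
  by apply: zero_case => //; apply/eqP; rewrite -size_poly_eq0 -leqn0.
case: (eqVneq (G z j0 p) 0) => [G0|Gp0]; first by apply: zero_case.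
have Hle : (size (G z j0 mu) <= size (G z j0 p))%N by apply: Hmin.
set emu := (size (G z j0 mu)).-1.
set ep := (size (G z j0 p)).-1.
set a := lead_coef (G z j0 mu).
set b := lead_coef (G z j0 p).
have Ea : (ce j0 mu emu).@[z] = a by rewrite -(coef_G z) /a /b lead_coefE.
have Eb : (ce j0 p ep).@[z] = b by rewrite -(coef_G z) /a /b lead_coefE.
have a0 : a != 0 by rewrite lead_coef_eq0.
have Xj0 : vars_in Sx ('X_j0 : {mpoly C[N]}) by apply: viX; right.
set p1 := ce j0 mu emu * p - ce j0 p ep * 'X_j0 ^+ (ep - emu) * mu.
have Kp1 : Kp K p1.
  apply: (KpB HK); apply: (KpM HK) => //; first exact: ce_K.
  apply: (KpM HK); first exact: ce_K.
  by apply: (KpXn HK); apply: (KpX HK).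
have Vp1 : vars_in Sx p1.
  apply: viB; apply: viM => //; try apply: viM; try apply: viXn => //.
    by apply: (vi_weak _ (ce_S (e:=emu) Vmu)) => l; left.
  by apply: (vi_weak _ (ce_S (e:=ep) Vp)) => l; left.
have Zp1 : p1.@[z] = 0 by rewrite /p1 mevalB !mevalM Zp Zmu !mulr0 subrr.
have Gce : forall q e, vars_in Sx q -> G z j0 (ce j0 q e) = ((ce j0 q e).@[z])%:P.
  move=> q e Vq; apply: Gconst; apply: (vi_weak _ (ce_vi (e:=e) Vq)).
  by move=> l [].
have Gp1 : G z j0 p1 = a%:P * G z j0 p - b%:P * ('X^(ep - emu) * G z j0 mu).
  by rewrite /p1 GB !GM !Gce // Ea Eb GXn mulrA.
have szp : size (G z j0 p) = ep.+1 by rewrite /ep prednK // lt0n size_poly_eq0.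
have szmu : size (G z j0 mu) = emu.+1 by rewrite /emu prednK // ltnW.
have lee : (emu <= ep)%N by rewrite -ltnS -szp -szmu.
have szp1 : (size (G z j0 p1) <= ep)%N.
  apply/leq_sizeP => j Hj; rewrite Gp1 coefB !coefCM coefXnM.
  rewrite ltnNge (leq_trans (leq_subr _ _) Hj) /=.
  case: (ltngtP j ep) => [|Hjg|->]; first by rewrite ltnNge Hj.
    rewrite !nth_default ?mulr0 ?subrr //; first by rewrite szmu; lia.
    by rewrite szp.
  by rewrite subKn // -/b [X in b * X]lead_coefE -/emu -/a mulrC subrr.
have D1 : Dd z (upd d j0 v) p1 = 0.
  apply: IHs => //; move: szp1 Hs; rewrite szp; lia.
move: D1; rewrite /p1 DdB !DdM Dmu Zp Zmu Ea !mulr0 !add0r ?addr0 ?subr0.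
by move/eqP; rewrite mulf_eq0 (negbTE a0) => /eqP.
Qed.
End Step.

Section Main.
Variables (K : C -> Prop) (HK : is_subfield K) (n m : nat).
Variables (x : 'I_n -> C) (y : 'I_m -> C).
Hypothesis Hx : alg_indep_over K x.
Local Notation z := (join_pt x y).

Lemma base (p : {mpoly C[n + m]}) :
  Kp K p -> vars_in (fun l : 'I_(n + m) => (l < n)%N) p -> p.@[z] = 0 -> p = 0.
Proof.
move=> Kpp Vp Zp.
pose h := fun l : 'I_(n + m) => match split l with inl i => ('X_i : {mpoly C[n]}) | inr _ => 0 end.
pose q := mmap (@mpolyC n C) h p.
have Kq : Kp K q.
  apply: Kp_mmap => // l; rewrite /h; case: (split l) => [i|j].
    exact: KpX.
  exact: Kp0.
have Zq : q.@[x] = 0.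
  rewrite -Zp /q meval_mmap rmorph_mmap (meval_mmap z).
  rewrite (@mmap_eq_f _ _ _ _ idfun); last by move=> c /=; rewrite mmapC.
  apply: mmap_eq_h => mono Hm l Hl /=; rewrite /h /join_pt.
  case: (splitP l) => [i Hi|j Hj]; first by rewrite mmapX mmap1U.
  by exfalso; move: (Vp mono Hm l Hl); rewrite Hj ltnNge leq_addr.
have q0 : q = 0.
  by apply: Hx => //; move=> mono _; apply: Kq.
pose phi := mmap (@mpolyC (n + m) C) (fun i : 'I_n => 'X_(lshift m i)).
suff E : phi q = p by rewrite -E q0 /phi rmorph0.
rewrite /phi /q rmorph_mmap -[in RHS](mmap_id p).
rewrite (@mmap_eq_f _ _ _ _ (@mpolyC (n + m) C)); last by move=> c /=; rewrite mmapC.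
apply: mmap_eq_h => mono Hm l Hl /=; rewrite /h.
case: (splitP l) => [i Hi|j Hj].
  by rewrite mmapX mmap1U; congr 'X_(_); apply: val_inj.
by exfalso; move: (Vp mono Hm l Hl); rewrite Hj ltnNge leq_addr.
Qed.

Lemma derext k : (k <= m)%N -> forall d0 : 'I_(n + m) -> C, exists d,
  (forall l : 'I_(n + m), (l < n)%N -> d l = d0 l) /\
  forall p, Kp K p -> vars_in (fun l : 'I_(n + m) => (l < n + k)%N) p -> p.@[z] = 0 ->
    Dd z d p = 0.
Proof.
elim: k => [|k IHk] Hk d0.
  exists d0; split => // p Kpp Vp Zp.
  rewrite (base Kpp) //; last by rewrite addn0 in Vp.
  by rewrite -mpolyC0 DdC.
have [d [Hd0 Hd]] := IHk (ltnW Hk) d0.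
have Hj : (n + k < n + m)%N by rewrite ltn_add2l.
pose j0 := Ordinal Hj.
have Hj0 : ~ (j0 < n + k)%N by rewrite /= ltnn.
have [v Hv] := step HK (S := fun l : 'I_(n + m) => (l < n + k)%N) (j0 := j0) Hj0 Hd.
exists (upd d j0 v); split.
  move=> l Hl; rewrite /upd; case: eqP => [E|_]; last exact: Hd0.
  by move: Hl; rewrite E /= ltnNge leq_addr.
move=> p Kpp Vp Zp; apply: Hv => //; apply: vi_weak Vp => l Hl.
rewrite /Sx; case: (ltngtP l (n + k)) => [H|H|H]; [by left | | by right; apply: val_inj].
by exfalso; move: Hl; rewrite addnS ltnS leqNgt H.
Qed.
End Main.

Lemma coeffs_Kp (K : C -> Prop) (HK : is_subfield K) N (p : {mpoly C[N]}) :
  coeffs_in K p -> Kp K p.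
Proof.
move=> H mono; case: (boolP (mono \in msupp p)) => [/H //|/memN_msupp_eq0 ->].
exact: K0.
Qed.

Section Field.
Variables (K : C -> Prop) (HK : is_subfield K) (n m : nat).
Variables (x : 'I_n -> C) (y : 'I_m -> C).
Local Notation z := (join_pt x y).
Definition Smid (l : 'I_(n + m)) := (m <= l)%N /\ (l < n)%N.

Definition Rset (u : C) := exists a b : {mpoly C[n + m]},
  [/\ Kp K a, Kp K b, vars_in Smid a /\ vars_in Smid b, b.@[z] != 0 & u = a.@[z] / b.@[z]].

Lemma Rset_subfield : is_subfield Rset.
Proof.
split.
- exists 1, 1; split; rewrite ?meval1 ?divr1 ?oner_eq0 //; try exact: Kp1; split; exact: vi1.
- move=> u v [a [b [Ka Kb [Va Vb] bz ->]]] [c [e [Kc Ke [Vc Ve] ez ->]]].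
  exists (a * e - c * b), (b * e); split.
  + by apply: KpB => //; apply: KpM.
  + by apply: KpM.
  + by split; [apply: viB; apply: viM | apply: viM].
  + by rewrite mevalM mulf_neq0.
  + by rewrite mevalB !mevalM; field; apply/andP; split.
- move=> u v [a [b [Ka Kb [Va Vb] bz ->]]] [c [e [Kc Ke [Vc Ve] ez ->]]].
  case: (eqVneq c.@[z] 0) => [c0|c0].
    exists 0, 1; split; rewrite ?meval1 ?oner_eq0 //; try exact: Kp1; try exact: Kp0.
      by split; [exact: vi0 | exact: vi1].
    by rewrite c0 mul0r invr0 mulr0 meval0 mul0r.
  exists (a * e), (b * c); split.
  + by apply: KpM.
  + by apply: KpM.
  + by split; apply: viM.
  + by rewrite mevalM mulf_neq0.
  + rewrite !mevalM; field; by rewrite bz c0 ez.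
Qed.

Lemma K_in_R c : K c -> Rset c.
Proof.
move=> Kc; exists c%:MP, 1; split; rewrite ?meval1 ?mevalC ?divr1 ?oner_eq0 //.
- exact: KpC.
- exact: Kp1.
- split; [exact: viC | exact: vi1].
Qed.

Hypothesis Hmn : (m < n)%N.

Lemma join_l (i : 'I_n) : z (lshift m i) = x i.
Proof.
rewrite /join_pt; case: splitP => [j Hj|j Hj]; first by congr x; apply: val_inj.
by move: Hj => /= Hj; move: (ltn_ord i); rewrite Hj ltnNge leq_addr.
Qed.

Lemma join_r (l : 'I_m) : z (rshift n l) = y l.
Proof.
rewrite /join_pt; case: splitP => [j Hj|j Hj]; last first.
  by congr y; apply: val_inj; move: Hj => /= /eqP; rewrite eqn_add2l => /eqP.
by move: (ltn_ord j); rewrite -Hj /= ltnNge leq_addr.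
Qed.

Lemma S_in_R u : (exists i : 'I_n, (m <= i)%N /\ u = x i) -> Rset u.
Proof.
move=> [i [Hi ->]]; exists 'X_(lshift m i), 1; split; rewrite ?meval1 ?divr1 ?oner_eq0 //.
- exact: KpX.
- exact: Kp1.
- split; last exact: vi1.
  by apply: viX; split => //=.
- by rewrite mevalXU join_l.
Qed.

Lemma gen_in_R u : gen_field K (fun z => exists i : 'I_n, (m <= i)%N /\ z = x i) u -> Rset u.
Proof. move=> H; apply: H; [exact: Rset_subfield | exact: K_in_R | exact: S_in_R]. Qed.

Lemma comden (s : seq C) : (forall u, u \in s -> Rset u) ->
  exists b, [/\ Kp K b, vars_in Smid b, b.@[z] != 0 &
    forall u, u \in s -> exists a, [/\ Kp K a, vars_in Smid a & u * b.@[z] = a.@[z]]].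
Proof.
elim: s => [|u s IH] Hs.
  exists 1; split; rewrite ?meval1 ?oner_eq0 //; [exact: Kp1 | exact: vi1].
have [b [Kb Vb bz Hb]] := IH (fun w Hw => Hs w (ltac:(by rewrite in_cons Hw orbT))).
have [a0 [b0 [Ka0 Kb0 [Va0 Vb0] b0z Eu]]] := Hs u (mem_head _ _).
exists (b * b0); split.
- exact: KpM.
- exact: viM.
- by rewrite mevalM mulf_neq0.
move=> w; rewrite in_cons => /orP [/eqP ->|Hw].
  exists (a0 * b); split; [exact: KpM | exact: viM |].
  by rewrite !mevalM Eu; field.
have [a [Ka Va Ea]] := Hb w Hw.
exists (a * b0); split; [exact: KpM | exact: viM |].
by rewrite !mevalM mulrA Ea.
Qed.
End Field.

Unset Implicit Arguments.
Theorem theorem4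
  (K : C -> Prop) (HK : is_subfield K)
  (HQ : forall q : rat, K (ratr q))
  (m n : nat) (Hm : (1 <= m)%N) (Hmn : (m < n)%N)
  (x : 'I_n -> C) (y : 'I_m -> C)
  (f : 'I_m -> {mpoly C[n + m]})
  (HfK : forall j, coeffs_in K (f j))
  (Hf0 : forall j, (f j).@[join_pt x y] = 0)
  (Hx : alg_indep_over K x)
  (Hdet : \det (\matrix_(j < m, i < m)
             ((f j)^`M(lshift m (widen_ord (ltnW Hmn) i))).@[join_pt x y]) != 0) :
  alg_indep_over (gen_field K (fun z => exists i : 'I_n, (m <= i)%N /\ z = x i)) y.
Proof.
set z := join_pt x y.
move=> p Hp Zp; case: (eqVneq p 0) => // pn0; exfalso.
have Hs : forall u, u \in [seq p@_mono | mono <- msupp p] -> Rset K x y u.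
  move=> u /mapP [mono Hmo ->]; apply: (gen_in_R HK); exact: Hp.
have [b [Kb Vb bz Hb]] := comden HK Hs.
have HA : forall mono : 'X_{1..m}, exists a : {mpoly C[n + m]},
    mono \in msupp p -> [/\ Kp K a, vars_in (Smid (n:=n) (m:=m)) a & p@_mono * b.@[z] = a.@[z]].
  move=> mono; case: (boolP (mono \in msupp p)) => Hmo; last by exists 0.
  have [a Ha] := Hb _ (map_f (fun mono => p@_mono) Hmo).
  by exists a.
pose A := fun mono => proj1_sig (constructive_indefinite_description _ (HA mono)).
have HAs : forall mono, mono \in msupp p ->
    [/\ Kp K (A mono), vars_in (Smid (n:=n) (m:=m)) (A mono) & p@_mono * b.@[z] = (A mono).@[z]].
  by move=> mono; rewrite /A; case: constructive_indefinite_description.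
pose Ymon := fun mono : 'X_{1..m} =>
  \prod_(l < m) ('X_(rshift n l) : {mpoly C[n + m]}) ^+ (mono l).
pose P := \sum_(mono <- msupp p) A mono * Ymon mono.
pose Sge := fun l : 'I_(n + m) => (m <= l)%N.
have KY : forall mono, Kp K (Ymon mono).
  by move=> mono; apply: (Kpprod HK) => l _; apply: (KpXn HK); apply: (KpX HK).
have VY : forall mono, vars_in Sge (Ymon mono).
  move=> mono; apply: viprod => l _; apply: viXn; apply: viX.
  by rewrite /Sge /= (leq_trans (ltnW Hmn)) // leq_addr.
have KP : Kp K P.
  rewrite /P big_seq; apply: (Kpsum HK) => mono Hmo; apply: (KpM HK) => //.
  by case: (HAs mono Hmo).
have VP : vars_in Sge P.
  rewrite /P big_seq; apply: visum => mono Hmo; apply: viM => //.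
  case: (HAs mono Hmo) => _ Va _; apply: vi_weak Va => l [].
  by rewrite /Sge.
have Yz : forall mono, (Ymon mono).@[z] = \prod_(l < m) y l ^+ mono l.
  move=> mono; rewrite /Ymon rmorph_prod; apply: eq_bigr => l _.
  by rewrite rmorphXn /= mevalXU /z join_r.
have ZP : P.@[z] = 0.
  rewrite /P rmorph_sum /= (eq_big_seq (fun mono => b.@[z] * (p@_mono * \prod_(l < m) y l ^+ mono l))).
    by rewrite -mulr_sumr -mevalE Zp mulr0.
  move=> mono Hmo; rewrite mevalM Yz; case: (HAs mono Hmo) => _ _ <-.
  by rewrite mulrA [b.@[z] * _]mulrC.
have PN0 : P != 0.
  pose hs := fun l : 'I_(n + m) => match split l with
     inl i => (x i)%:MP | inr j => ('X_j : {mpoly C[m]}) end.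
  pose sig := mmap (@mpolyC m C) hs.
  have sA : forall a, vars_in (Smid (n:=n) (m:=m)) a -> sig a = (a.@[z])%:MP.
    move=> a Va; rewrite /sig (@mmap_eq_h _ _ _ _ hs (fun l => (z l)%:MP)).
      by rewrite meval_mmap rmorph_mmap.
    move=> mono Hmo l Hl; have [_ Hln] := Va mono Hmo l Hl.
    rewrite /hs /z /join_pt; case: splitP => [i _|j Hj] //.
    by move: Hln; rewrite Hj ltnNge leq_addr.
  have sY : forall mono, sig (Ymon mono) = 'X_[mono].
    move=> mono; rewrite /sig /Ymon rmorph_prod [RHS]mpolyXE_id; apply: eq_bigr => l _.
    rewrite rmorphXn /= mmapX mmap1U /hs; case: splitP => [i Hi|j Hj].
      by move: (ltn_ord i); rewrite -Hi /= ltnNge leq_addr.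
    by congr ('X_ _ ^+ _); apply: val_inj; move: Hj => /= /eqP; rewrite eqn_add2l => /eqP.
  have sP : sig P = b.@[z] *: p.
    rewrite /P /sig rmorph_sum /= -/sig [in RHS](mpolyE p) scaler_sumr; apply: eq_big_seq => mono Hmo.
    case: (HAs mono Hmo) => _ Va Ea.
    rewrite /sig rmorphM /= -/sig sA // sY -Ea mul_mpolyC scalerA mulrC.
    by [].
  apply/eqP => P0; move: sP; rewrite P0 /sig rmorph0 => /esym/eqP; rewrite mscalerI.
  by rewrite (negbTE bz) (negbTE pn0).
pose Q := fun q : {mpoly C[n + m]} => [/\ Kp K q, vars_in Sge q, q.@[z] = 0 & q != 0].
have [P0 [[K0 V0 Z0 N0] Hmin]] := ex_min (Q := Q) (fun q => msize q) (ex_intro _ P (And4 KP VP ZP PN0)).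
have [mono [Hmono mono0]] : exists mono, P0@_mono != 0 /\ mono != 0%MM.
  apply: NNPP => Hno.
  have E : P0 = (P0@_0%MM)%:MP.
    apply/mpolyP => mono; rewrite mcoeffC; case: (eqVneq mono 0%MM) => [->|Hne].
      by rewrite mulr1.
    rewrite mulr0; case: (eqVneq P0@_mono 0) => // H; exfalso; apply: Hno.
    by exists mono.
  move: Z0 N0; rewrite E mevalC => ->; by rewrite mpolyC0 eqxx.
have [j Hj] : exists j, mono j != 0%N.
  apply: NNPP => Hno; apply: (negP mono0); apply/eqP/mnmP => j; rewrite mnm0E.
  by case: (eqVneq (mono j) 0%N) => // H; exfalso; apply: Hno; exists j.
have Sj : (m <= j)%N by apply: (V0 mono Hmono j Hj).
set P1 := P0^`M(j).
have P1n0 : P1 != 0.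
  apply/eqP => E; move: (congr1 (mcoeff (mono - U_(j))%MM) E).
  rewrite mcoeff_mderiv mcoeff0 submK; last by rewrite lep1mP.
  rewrite mnmBE mnm1E eqxx subn1 prednK ?lt0n // => /eqP; rewrite mulrn_eq0.
  by rewrite (negbTE Hmono) (negbTE Hj).
have szlt : (msize P1 < msize P0)%N.
  have H0 : (0 < msize P0)%N by rewrite lt0n msize_poly_eq0.
  suff : (msize P1 <= (msize P0).-1)%N by move: H0; lia.
  rewrite msizeE; apply/bigmax_leqP_seq => mono' Hm' _.
  move: Hm'; rewrite mcoeff_msupp mcoeff_mderiv => Hm'.
  have : (mono' + U_(j))%MM \in msupp P0.
    by rewrite mcoeff_msupp; apply: contraNneq Hm' => ->; rewrite mul0rn.
  move/msize_mdeg_lt; rewrite mdegD mdeg1; lia.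
have K1 : Kp K P1 by apply: Kpderiv.
have V1 : vars_in Sge P1 by apply: videriv.
have Z1 : P1.@[z] != 0.
  apply/eqP => H; have := Hmin P1 (And4 K1 V1 H P1n0).
  by rewrite leqNgt szlt.
have HD0 : forall i : 'I_n, exists d : 'I_(n + m) -> C,
    (forall l : 'I_(n + m), (l < n)%N -> d l = (l == lshift m i)%:R) /\
    forall q, Kp K q -> vars_in (fun l : 'I_(n + m) => (l < n + m)%N) q -> q.@[z] = 0 ->
      Dd z d q = 0.
  move=> i; exact: (derext HK y Hx (leqnn m) (fun l => (l == lshift m i)%:R)).
have [D HD] := fin_all_exists HD0.
have DdE : forall i q, Dd z (D i) q = (q^`M(lshift m i)).@[z] +
    \sum_(l < m) D i (rshift n l) * (q^`M(rshift n l)).@[z].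
  move=> i q; rewrite /Dd big_split_ord /=; congr (_ + _).
  rewrite (bigD1 i) //= (proj1 (HD i)) ?eqxx ?mul1r //=.
  rewrite big1 ?addr0 // => l Hl; rewrite (proj1 (HD i)) //=.
  have -> : (lshift m l == lshift m i) = false.
    apply/negbTE; apply: contra Hl => /eqP/(congr1 val) /= E.
    by apply/eqP/val_inj.
  by rewrite mul0r.
have HDq : forall i q, Kp K q -> q.@[z] = 0 -> Dd z (D i) q = 0.
  by move=> i q Kq Zq; apply: (proj2 (HD i)) => // mono _ l _; apply: ltn_ord.
pose wd := widen_ord (ltnW Hmn).
pose V := \matrix_(l < m, i < m) D (wd i) (rshift n l).
pose Bm := \matrix_(j < m, l < m) ((f j)^`M(rshift n l)).@[z].
pose w := \row_(l < m) (P0^`M(rshift n l)).@[z].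
set AM := \matrix_(j < m, i < m) _ in Hdet.
have EA : AM = - (Bm *m V).
  apply/matrixP => j' i; rewrite !mxE.
  have := HDq (wd i) (f j') (coeffs_Kp HK (HfK j')) (Hf0 j'); rewrite DdE.
  move/eqP; rewrite addr_eq0 => /eqP ->.
  by congr (- _); apply: eq_bigr => l _; rewrite !mxE mulrC.
have Ew : w *m V = 0.
  apply/rowP => i; rewrite !mxE.
  have := HDq (wd i) P0 K0 Z0; rewrite DdE.
  rewrite (@mderiv_novar _ Sge P0 _ V0); last by rewrite /Sge /= leqNgt ltn_ord.
  rewrite meval0 add0r => H; rewrite -[X in _ = X]H.
  by apply: eq_bigr => l _; rewrite !mxE mulrC.
have detV : \det V != 0.
  apply: contraNneq Hdet => dV.
  by rewrite EA -scaleN1r detZ det_mulmx dV !mulr0.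
have Vu : V \in unitmx by rewrite unitmxE unitfE.
have w0 : w = 0 by rewrite -[w](mulmxK Vu) Ew mul0mx.
case: (splitP j) => [i Hi|l Hl].
  have Ej : j = lshift m i by apply: val_inj.
  have := HDq i P0 K0 Z0; rewrite DdE big1 ?addr0; last first.
    move=> l _; have : w 0 l = 0 by rewrite w0 mxE.
    by rewrite mxE => ->; rewrite mulr0.
  by rewrite -Ej => H; move: Z1; rewrite /P1 H eqxx.
have Ej : j = rshift n l by apply: val_inj.
have : w 0 l = 0 by rewrite w0 mxE.
by rewrite mxE -Ej => H; move: Z1; rewrite /P1 H eqxx.
Qed.
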